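(* Let $H\in\mathbb{R}^{n\times d}$ have rank $h$, $\Sigma\in\mathbb{R}^{n\times n}$ symmetric positive definite, $\Gamma_0$ the empirical covariance of an initial ensemble, $C_0=H\Gamma_0H^\top$ and $C_{i+1}=\Sigma-\Sigma(C_i+\Sigma)^{-1}\Sigma$. Consider the generalized eigenvalue problem $C_i\tilde w=\tilde\delta\Sigma\tilde w$, whose eigenvectors do not depend on $i$, with eigenvalue $\tilde\delta_{\ell,i}$ along eigenvector $\tilde w_\ell$. Then $\tilde\delta_{\ell,0}=0$ implies $\tilde\delta_{\ell,i}=0$ for all $i\ge1$, and $\tilde\delta_{\ell,0}>0$ implies $\tilde\delta_{\ell,i}>0$ for all $i\ge1$. Let $r$ be the number of positive eigenvalues. There is a $\Sigma$-orthogonal basis $\{\tilde w_1,\dots,\tilde w_n\}$ of $\mathbb{R}^n$ of eigenvectors such that: (1) $\tilde w_1,\dots,\tilde w_r\in\mathsf{Ran}(\Sigma^{-1}H)$ have positive eigenvalues, labeled with $\tilde\delta_{1,1}\ge\dots\ge\tilde\delta_{r,1}>0$, and this ordering is preserved for all $i\ge1$; (2) if $r<h$, $\tilde w_{r+1},\dots,\tilde w_h\in\mathsf{Ran}(\Sigma^{-1}H)$ have eigenvalue zero; (3) if $h<n$, $\tilde w_{h+1},\dots,\tilde w_n\in\mathsf{Ker}(H^\top)$ have eigenvalue zero.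
   Context: Empirical covariance of $v_0^{(1)},\dots,v_0^{(J)}$: $\Gamma_0=\frac1{J-1}\sum_j(v_0^{(j)}-\bar v_0)(v_0^{(j)}-\bar v_0)^\top$, $\bar v_0=\frac1J\sum_jv_0^{(j)}$. $\Sigma$-orthogonal means $\tilde w_k^\top\Sigma\tilde w_l=0$ for $k\ne l$. *)

(* Defs.v *)
From mathcomp Require Import all_boot all_order all_algebra.
Set Implicit Arguments. Unset Strict Implicit. Unset Printing Implicit Defensive.
Import Order.TTheory GRing.Theory Num.Theory.
Local Open Scope ring_scope.

Section Defs.
Variable R : rcfType.

Definition ens_mean (d J : nat) (v : 'I_J -> 'cV[R]_d) : 'cV[R]_d :=
  (J%:R)^-1 *: \sum_(j < J) v j.

Definition emp_cov (d J : nat) (v : 'I_J -> 'cV[R]_d) : 'M[R]_d :=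
  ((J.-1)%:R)^-1 *:
    \sum_(j < J) ((v j - ens_mean v) *m (v j - ens_mean v)^T).

Fixpoint Cseq (n : nat) (Sigma C0 : 'M[R]_n) (i : nat) : 'M[R]_n :=
  match i with
  | 0 => C0
  | i'.+1 => Sigma - Sigma *m invmx (Cseq Sigma C0 i' + Sigma) *m Sigma
  end.

Definition spd (n : nat) (S : 'M[R]_n) : Prop :=
  S^T = S /\ forall x : 'cV[R]_n, x != 0 -> 0 < (x^T *m S *m x) 0 0.

Definition in_ran_SinvH (n d : nat) (Sigma : 'M[R]_n) (H : 'M[R]_(n, d))
  (x : 'cV[R]_n) : Prop :=
  exists y : 'cV[R]_d, x = invmx Sigma *m H *m y.

Definition in_ker_HT (n d : nat) (H : 'M[R]_(n, d)) (x : 'cV[R]_n) : Prop :=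
  H^T *m x = 0.

Definition gen_eig (n : nat) (C Sigma : 'M[R]_n) (w : 'cV[R]_n) (delta : R) : Prop :=
  C *m w = delta *: (Sigma *m w).
End Defs.

(* Main.v *)
Require Import Defs.
From mathcomp Require Import all_boot all_order all_algebra.
From mathcomp Require Import complex lra ring.
Import Order.TTheory GRing.Theory Num.Theory.
Local Open Scope ring_scope.
Set Implicit Arguments. Unset Strict Implicit.
From mathcomp Require Import zify.
Section RE.
Variable R : rcfType.
Notation cRe := (@complex.Re R).
Notation cIm := (@complex.Im R).
Notation toC := (real_complex R).
Lemma ReD (x y : R[i]) : cRe (x + y) = cRe x + cRe y.
Proof. by case: x => a b; case: y => c d. Qed.
Lemma ImD (x y : R[i]) : cIm (x + y) = cIm x + cIm y.
Proof. by case: x => a b; case: y => c d. Qed.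
Lemma Re0 : cRe 0 = 0. Proof. by []. Qed.
Lemma Im0 : cIm 0 = 0. Proof. by []. Qed.
Lemma ReMr (x : R[i]) (k : R) : cRe (x * toC k) = cRe x * k.
Proof. case: x => a b /=. by rewrite mulr0 subr0. Qed.
Lemma ImMr (x : R[i]) (k : R) : cIm (x * toC k) = cIm x * k.
Proof. case: x => a b /=. by rewrite mulr0 add0r. Qed.
Lemma ReMl (x z : R[i]) : cRe (z * x) = cRe z * cRe x - cIm z * cIm x.
Proof. by case: x; case: z. Qed.
Lemma ImMl (x z : R[i]) : cIm (z * x) = cRe z * cIm x + cIm z * cRe x.
Proof. by case: x => a b; case: z => c d /=; rewrite addrC. Qed.

Lemma e_add m n (X Y : 'M[R]_(m,n)) i j : (X + Y) i j = X i j + Y i j.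
Proof. by rewrite mxE. Qed.
Lemma e_opp m n (X : 'M[R]_(m,n)) i j : (- X) i j = - X i j.
Proof. by rewrite mxE. Qed.
Lemma e_scale m n a (X : 'M[R]_(m,n)) i j : (a *: X) i j = a * X i j.
Proof. by rewrite mxE. Qed.

Lemma bil_sym k (a b : 'rV[R]_k) (M : 'M_k) : M^T = M ->
  (a *m M *m b^T) 0 0 = (b *m M *m a^T) 0 0.
Proof.
move=> hM; have tr00 (X : 'M[R]_1) : X^T 0 0 = X 0 0 by rewrite mxE.
by rewrite -tr00 !trmx_mul trmxK hM mulmxA.
Qed.

Lemma real_eig k (A G : 'M[R]_k) : (0 < k)%N -> G^T = G -> (A *m G)^T = A *m G ->
  (forall c : 'rV_k, c != 0 -> 0 < (c *m G *m c^T) 0 0) ->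
  exists x (c : 'rV_k), c != 0 /\ c *m A = x *: c.
Proof.
move=> k0 hG hAG hpos.
have hpos0 (c : 'rV_k) : 0 <= (c *m G *m c^T) 0 0.
  have [->|cn0] := eqVneq c 0; last by rewrite le_eqVlt hpos ?orbT.
  by rewrite !mul0mx mxE.
have [z /eigenvalueP [v hv vn0]] := Theorem7' (map_mx toC A) k0.
set p := map_mx cRe v; set q := map_mx cIm v.
have hp : p *m A = cRe z *: p - cIm z *: q.
  apply/rowP => j; have := congr1 (fun X : 'M[R[i]]_(1,k) => cRe (X 0 j)) hv.
  rewrite !mxE (big_morph cRe ReD Re0) ReMl => <-.
  by apply: eq_bigr => i _; rewrite !mxE ReMr.
have hq : q *m A = cIm z *: p + cRe z *: q.
  apply/rowP => j; have := congr1 (fun X : 'M[R[i]]_(1,k) => cIm (X 0 j)) hv.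
  rewrite !mxE (big_morph cIm ImD Im0) ImMl addrC => <-.
  by apply: eq_bigr => i _; rewrite !mxE ImMr.
have e1 : (p *m (A *m G) *m q^T) 0 0 = (q *m (A *m G) *m p^T) 0 0 by apply: bil_sym.
rewrite !mulmxA hp hq in e1.
rewrite !(mulmxBl, mulmxDl) -!scalemxAl !(e_add, e_opp, e_scale) (bil_sym q p hG) in e1.
have hy : cIm z * ((p *m G *m p^T) 0 0 + (q *m G *m q^T) 0 0) = 0 by lra.
have pq : (p != 0) || (q != 0).
  apply: contraNT vn0; rewrite negb_or !negbK => /andP[/eqP p0 /eqP q0].
  apply/eqP/rowP => j.
  have := congr1 (fun X : 'M[R]_(1,k) => X 0 j) p0.
  have := congr1 (fun X : 'M[R]_(1,k) => X 0 j) q0.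
  rewrite !mxE; case: (v 0 j) => a b /= -> ->; by [].
have spos : 0 < (p *m G *m p^T) 0 0 + (q *m G *m q^T) 0 0.
  have := hpos0 p; have := hpos0 q.
  case/orP: pq => [/hpos|/hpos]; lra.
have y0 : complex.Im z = 0.
  by move/eqP: hy; rewrite mulf_eq0 (gt_eqF spos) orbF => /eqP.
rewrite y0 scale0r subr0 in hp; rewrite y0 scale0r add0r in hq.
case/orP: pq => [pn0|qn0]; first by exists (complex.Re z), p.
by exists (complex.Re z), q.
Qed.
End RE.

Section Core.
Variable R : rcfType.
Variable n : nat.
Variables (Sig C : 'M[R]_n).
Hypothesis hS : Sig^T = Sig.
Hypothesis hpd : forall u : 'rV_n, u != 0 -> 0 < (u *m Sig *m u^T) 0 0.
Hypothesis hU : Sig \in unitmx.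
Hypothesis hC : C^T = C.
Let N := C *m invmx Sig.

Lemma NSig : N *m Sig = C.
Proof. by rewrite /N -mulmxA mulVmx // mulmx1. Qed.

Lemma orth_sym (u v : 'rV[R]_n) : u *m Sig *m v^T = 0 -> v *m Sig *m u^T = 0.
Proof. by move=> h; have := congr1 trmx h; rewrite !trmx_mul trmxK hS trmx0 mulmxA. Qed.

Lemma uSu_neq0 (u : 'rV[R]_n) : u != 0 -> u *m Sig *m u^T != 0.
Proof.
move=> /hpd h; apply/eqP => e; move: h; rewrite e mxE ltxx //.
Qed.

Lemma core k : forall m (S : 'M[R]_(m, n)), \rank S = k -> (S *m N <= S)%MS ->
  exists us : seq 'rV[R]_n, [/\ size us = k, uniq us,
    all (fun u => (u <= S)%MS && (u != 0)) us,
    {in us, forall u, exists x, u *m C = x *: (u *m Sig)} &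
    {in us &, forall u v, u != v -> u *m Sig *m v^T = 0}].
Proof.
elim: k => [|k IH] m S rS stS.
  by exists [::]; split.
set B := row_base S.
have BS : (B <= S)%MS by rewrite eq_row_base.
have SB : (S <= B)%MS by rewrite eq_row_base.
have Bfree : row_free B := row_base_free S.
clearbody B.
have BN : (B *m N <= B)%MS.
  by apply: submx_trans (submxMr _ BS) _; apply: submx_trans stS SB.
set A := B *m N *m pinvmx B.
have hBN : B *m N = A *m B by rewrite /A mulmxKpV.
set G := B *m Sig *m B^T.
have [x [c [cn0 hc]]] : exists x (c : 'rV_(\rank S)), c != 0 /\ c *m A = x *: c.
  apply: (real_eig (G := G)).
  - by rewrite rS.
  - by rewrite /G !trmx_mul trmxK hS mulmxA.
  - rewrite /G !mulmxA -hBN -(mulmxA B N) NSig.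
    by rewrite !trmx_mul trmxK hC mulmxA.
  - move=> c' c'n0.
    have -> : c' *m G *m c'^T = (c' *m B) *m Sig *m (c' *m B)^T by rewrite /G trmx_mul !mulmxA.
    apply: hpd; by rewrite mulmx_free_eq0.
set u := c *m B.
have un0 : u != 0 by rewrite /u mulmx_free_eq0.
have uS : (u <= S)%MS by apply: submx_trans (submxMl _ _) BS.
have uN : u *m N = x *: u by rewrite /u -mulmxA hBN mulmxA hc scalemxAl.
have uC : u *m C = x *: (u *m Sig) by rewrite -NSig mulmxA uN scalemxAl.
set K := kermx (Sig *m u^T).
set S' := (S :&: K)%MS.
have S'S : (S' <= S)%MS by apply: capmxSl.
have S'K : S' *m (Sig *m u^T) = 0.
  by apply/sub_kermxP; apply: capmxSr.
have stS' : (S' *m N <= S')%MS.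
  rewrite sub_capmx; apply/andP; split.
    by apply: submx_trans (submxMr _ S'S) stS.
  apply/sub_kermxP.
  have CuT : C *m u^T = x *: (Sig *m u^T).
    by rewrite -hC -trmx_mul uC linearZ /= trmx_mul hS.
  rewrite -[S' *m N *m _]mulmxA (mulmxA N Sig) NSig CuT -scalemxAr S'K scaler0 //.
have rK : \rank K = (n - 1)%N.
  rewrite /K mxrank_ker; congr (_ - _)%N.
  apply/eqP; rewrite eqn_leq rank_leq_col lt0n mxrank_eq0.
  apply: contra (uSu_neq0 un0) => /eqP e; by rewrite -mulmxA e mulmx0.
have rS' : \rank S' = k.
  have lt : (\rank S' < \rank S)%N.
    apply: rank_ltmx; rewrite ltmxE S'S /=.
    apply: contra (uSu_neq0 un0) => SS'.
    have : (u <= S')%MS by apply: submx_trans uS SS'.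
    by move/(submx_trans)/(_ (capmxSr S K))/sub_kermxP; rewrite mulmxA => ->.
  have := mxrank_sum_cap S K; have := rank_leq_col (S + K)%MS.
  have := rank_leq_col S.
  rewrite -/S' rK rS in lt *; lia.
have [us' [sz uq alls eig orth]] := IH _ S' rS' stS'.
have uK : forall v, v \in us' -> v *m Sig *m u^T = 0.
  move=> v vin; move/allP: alls => /(_ v vin) /andP[vS' _].
  rewrite -mulmxA; apply/sub_kermxP; apply: submx_trans vS' (capmxSr S K).
exists (u :: us'); split => /=.
- by rewrite sz.
- rewrite uq andbT; apply/negP => /uK e.
  by move: (uSu_neq0 un0); rewrite e eqxx.
- rewrite uS un0 /=; apply/allP => v vin; move/allP: alls => /(_ v vin) /andP[vS' ->].
  by rewrite andbT (submx_trans vS' S'S).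
- move=> v; rewrite inE => /orP[/eqP ->|vin]; first by exists x.
  exact: eig.
- move=> v w; rewrite !inE => /orP[/eqP ->|vin] /orP[/eqP ->|win].
  + by rewrite eqxx.
  + by move=> _; apply: orth_sym; apply: uK.
  + by move=> _; apply: uK.
  + exact: orth.
Qed.
End Core.

Section Iter.
Variable R : rcfType.
Definition fstep (t : R) := 1 - (1 + t)^-1.

Lemma fstep0 : fstep 0 = 0.
Proof. by rewrite /fstep addr0 invr1 subrr. Qed.

Lemma fstep_ge0 t : 0 <= t -> 0 <= fstep t.
Proof.
move=> t0; rewrite /fstep subr_ge0 invf_le1; first lra.
lra.
Qed.

Lemma fstep_gt0 t : 0 < t -> 0 < fstep t.
Proof.
move=> t0; rewrite /fstep subr_gt0 invf_lt1; first lra.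
lra.
Qed.

Lemma fstep_mono s t : 0 <= s -> s <= t -> fstep s <= fstep t.
Proof.
move=> s0 st; rewrite /fstep lerD2l lerN2 lef_pV2 ?posrE; lra.
Qed.

Lemma iter_ge0 i t : 0 <= t -> 0 <= iter i fstep t.
Proof. by move=> t0; elim: i => //= i IH; apply: fstep_ge0. Qed.

Lemma iter_gt0 i t : 0 < t -> 0 < iter i fstep t.
Proof. by move=> t0; elim: i => //= i IH; apply: fstep_gt0. Qed.

Lemma iter0 i : iter i fstep 0 = 0.
Proof. by elim: i => //= i ->; apply: fstep0. Qed.

Lemma iter_mono i s t : 0 <= s -> s <= t -> iter i fstep s <= iter i fstep t.
Proof.
move=> s0 st; elim: i => //= i IH; apply: fstep_mono => //.
exact: iter_ge0.
Qed.

Lemma step1 n (Sig Ci : 'M[R]_n) (w : 'cV[R]_n) (t : R) :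
  (Ci + Sig) \in unitmx -> 0 <= t -> Ci *m w = t *: (Sig *m w) ->
  (Sig - Sig *m invmx (Ci + Sig) *m Sig) *m w = fstep t *: (Sig *m w).
Proof.
move=> hu t0 hw.
have e1 : (Ci + Sig) *m w = (1 + t) *: (Sig *m w).
  by rewrite mulmxDl hw scalerDl scale1r addrC.
have t1 : 1 + t != 0 by apply/lt0r_neq0; lra.
have e2 : invmx (Ci + Sig) *m (Sig *m w) = (1 + t)^-1 *: w.
  have := mulKmx hu w; rewrite e1 -scalemxAr => e.
  by rewrite -{2}e scalerA mulVf // scale1r.
rewrite mulmxBl -!mulmxA e2 -scalemxAr /fstep scalerBl scale1r //.
Qed.

Lemma mulmx_trcols n (A : 'M[R]_n) (W : 'I_n -> 'cV[R]_n) i l :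
  (A *m (\matrix_(k < n) (W k)^T)^T) i l = (A *m W l) i 0.
Proof. by rewrite !mxE; apply: eq_bigr => k _; rewrite !mxE. Qed.

Lemma unit_step n (Sig Ci : 'M[R]_n) (W : 'I_n -> 'cV[R]_n) (d : 'I_n -> R) :
  Sig \in unitmx -> row_free (\matrix_(k < n) (W k)^T) ->
  (forall l, 0 <= d l) -> (forall l, Ci *m W l = d l *: (Sig *m W l)) ->
  (Ci + Sig) \in unitmx.
Proof.
move=> hS hW d0 hC.
set M := (\matrix_(k < n) (W k)^T).
set D := diag_mx (\row_l (1 + d l)).
have e : (Ci + Sig) *m M^T = Sig *m M^T *m D.
  apply/matrixP => i l; rewrite mulmx_trcols /D mul_mx_diag mxE mulmx_trcols.
  rewrite mulmxDl hC e_add e_scale !mxE; ring.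
have uD : D \in unitmx.
  rewrite unitmxE det_diag unitfE; apply/prodf_neq0 => l _; rewrite mxE.
  by apply/lt0r_neq0; have := d0 l; lra.
have : (Ci + Sig) *m M^T \in unitmx.
  by rewrite e !unitmx_mul hS unitmx_tr -row_free_unit hW uD.
by rewrite unitmx_mul => /andP[].
Qed.
End Iter.

Section Facts.
Variable R : rcfType.

Lemma orth_free n (Sig : 'M[R]_n) m (M : 'M[R]_(m,n)) :
  (forall u : 'rV_n, u != 0 -> 0 < (u *m Sig *m u^T) 0 0) ->
  (forall k, row k M != 0) ->
  (forall k l, k != l -> row k M *m Sig *m (row l M)^T = 0) -> row_free M.
Proof.
move=> hpd hnz hor.
have key : forall c : 'rV_m, c *m M = 0 -> c = 0.
  move=> c cM; apply/rowP => l; rewrite mxE.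
  have : (c *m M *m Sig *m (row l M)^T) 0 0 = 0 by rewrite cM !mul0mx mxE.
  rewrite (mulmx_sum_row c M) !mulmx_suml summxE (bigD1 l) //=.
  rewrite big1 ?addr0; last first.
    move=> k kl; rewrite -!scalemxAl e_scale hor ?mxE ?mulr0 //.
  rewrite -!scalemxAl e_scale => /eqP; rewrite mulf_eq0 => /orP[/eqP //|].
  by rewrite (gt_eqF (hpd _ (hnz l))).
rewrite -kermx_eq0 -submx0; apply/rV_subP => c /sub_kermxP /key ->.
exact: sub0mx.
Qed.

Lemma spd_rows n (S : 'M[R]_n) : spd S ->
  S^T = S /\ forall u : 'rV_n, u != 0 -> 0 < (u *m S *m u^T) 0 0.
Proof.
case=> hS hp; split=> // u un0; have := hp u^T; rewrite trmxK trmx_eq0; exact.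
Qed.

Lemma spd_unit n (S : 'M[R]_n) :
  (forall u : 'rV_n, u != 0 -> 0 < (u *m S *m u^T) 0 0) -> S \in unitmx.
Proof.
move=> hp; rewrite -row_free_unit -kermx_eq0; apply: contraT => kn0.
set u := nz_row (kermx S).
have un0 : u != 0 by rewrite nz_row_eq0.
have uS : u *m S = 0 by apply/sub_kermxP; apply: nz_row_sub.
by have := hp u un0; rewrite uS mul0mx mxE ltxx.
Qed.

Lemma emp_cov_sym d J (v : 'I_J -> 'cV[R]_d) : (emp_cov v)^T = emp_cov v.
Proof.
rewrite /emp_cov linearZ /= linear_sum /=; congr (_ *: _).
by apply: eq_bigr => j _; rewrite trmx_mul trmxK.
Qed.

Lemma sq11 (a : 'M[R]_1) : (a *m a^T) 0 0 = a 0 0 ^+ 2.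
Proof. by rewrite !mxE big_ord1 !mxE expr2. Qed.

Lemma emp_cov_psd d J (v : 'I_J -> 'cV[R]_d) (z : 'rV_d) :
  0 <= (z *m emp_cov v *m z^T) 0 0.
Proof.
rewrite /emp_cov -scalemxAr -scalemxAl e_scale; apply: mulr_ge0.
  by rewrite invr_ge0 ler0n.
rewrite mulmx_sumr mulmx_suml summxE; apply: sumr_ge0 => j _.
set y := v j - ens_mean v.
have -> : z *m (y *m y^T) *m z^T = (z *m y) *m (z *m y)^T by rewrite trmx_mul !mulmxA.
by rewrite sq11 sqr_ge0.
Qed.

Lemma col_of_row n (A B : 'M[R]_n) (u : 'rV_n) x :
  A^T = A -> B^T = B -> u *m A = x *: (u *m B) -> A *m u^T = x *: (B *m u^T).
Proof.
move=> hA hB e; have := congr1 trmx e.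
by rewrite linearZ /= !trmx_mul hA hB.
Qed.
End Facts.

Unset Implicit Arguments.
Set Strict Implicit.

Theorem proposition4p3 (R : rcfType) (n d h J : nat)
  (H : 'M[R]_(n, d)) (Sigma : 'M[R]_n) (v : 'I_J -> 'cV[R]_d) :
  (1 < J)%N ->
  \rank H = h ->
  spd Sigma ->
  let C := Cseq Sigma (H *m emp_cov v *m H^T) in
  (* eigenvectors of C_0 stay eigenvectors of every C_i, with sign of
     the eigenvalue (zero / positive) preserved *)
  (forall (w : 'cV[R]_n) (delta0 : R), w != 0 -> gen_eig (C 0%N) Sigma w delta0 ->
     forall i : nat, exists deltai : R,
       gen_eig (C i) Sigma w deltai /\
       (delta0 = 0 -> deltai = 0) /\ (0 < delta0 -> 0 < deltai)) /\
  (* Sigma-orthogonal eigenbasis with the stated structure *)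
  (exists (w : 'I_n -> 'cV[R]_n) (delta : nat -> 'I_n -> R) (r : nat),
     [/\ row_free (\matrix_(k < n) (w k)^T),
         (forall k l : 'I_n, k != l -> ((w k)^T *m Sigma *m w l) 0 0 = 0),
         (forall (i : nat) (l : 'I_n), gen_eig (C i) Sigma (w l) (delta i l)),
         (r <= h)%N &
         [/\
         (* (1) *)
         (forall l : 'I_n, (l < r)%N ->
            in_ran_SinvH Sigma H (w l) /\ forall i : nat, 0 < delta i l) /\
         (forall (i : nat) (k l : 'I_n), (1 <= i)%N -> (k <= l)%N -> (l < r)%N ->
            delta i l <= delta i k),
         (* (2) *)
         (forall l : 'I_n, (r <= l)%N -> (l < h)%N ->
            in_ran_SinvH Sigma H (w l) /\ forall i : nat, delta i l = 0) &
         (* (3) *)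
         (forall l : 'I_n, (h <= l)%N ->
            in_ker_HT H (w l) /\ forall i : nat, delta i l = 0)]]).
Proof.
move=> J1 rH spdS C.
have [hS hpd] := spd_rows spdS.
have hU := spd_unit hpd.
set C0 := H *m emp_cov v *m H^T.
have hC : C0^T = C0 by rewrite /C0 !trmx_mul trmxK emp_cov_sym mulmxA.
have psd : forall u : 'rV_n, 0 <= (u *m C0 *m u^T) 0 0.
  move=> u; have -> : u *m C0 *m u^T = (u *m H) *m emp_cov v *m (u *m H)^T.
    by rewrite /C0 trmx_mul !mulmxA.
  exact: emp_cov_psd.
have evnn : forall (u : 'rV_n) x, u != 0 -> u *m C0 = x *: (u *m Sigma) -> 0 <= x.
  move=> u x un0 e; have := psd u; rewrite e -scalemxAl e_scale.
  by rewrite pmulr_lge0 // hpd.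
pose ev := fun u : 'rV[R]_n => (u *m C0 *m u^T) 0 0 / (u *m Sigma *m u^T) 0 0.
have evE : forall (u : 'rV_n) x, u != 0 -> u *m C0 = x *: (u *m Sigma) -> ev u = x.
  move=> u x un0 e; rewrite /ev e -scalemxAl e_scale mulfK //.
  by apply/lt0r_neq0/hpd.
set S1 := H^T *m invmx Sigma.
have rS1 : \rank S1 = h.
  by rewrite /S1 mxrankMfree ?mxrank_tr // row_free_unit unitmx_inv.
have stS1 : (S1 *m (C0 *m invmx Sigma) <= S1)%MS.
  have -> : S1 *m (C0 *m invmx Sigma) = (H^T *m invmx Sigma *m H *m emp_cov v) *m S1.
    by rewrite /S1 /C0 !mulmxA.
  exact: submxMl.
set S2 := kermx H.
have rS2 : \rank S2 = (n - h)%N by rewrite mxrank_ker rH.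
have stS2 : (S2 *m (C0 *m invmx Sigma) <= S2)%MS.
  by rewrite /S2 /C0 !mulmxA mulmx_ker !mul0mx sub0mx.
have [us1 [sz1 uq1 all1 eig1 orth1]] := core hS hpd hU hC rS1 stS1.
have [us2 [sz2 uq2 all2 eig2 orth2]] := core hS hpd hU hC rS2 stS2.
have cross : forall u w : 'rV_n, (u <= S1)%MS -> w *m H = 0 -> u *m Sigma *m w^T = 0.
  move=> u w /submxP [D ->] e; rewrite /S1 !mulmxA -(mulmxA _ (invmx Sigma)) mulVmx //.
  by rewrite mulmx1 -mulmxA -trmx_mul e trmx0 mulmx0.
have in1 : forall u, u \in us1 -> ((u <= S1)%MS /\ u != 0).
  by move=> u uin; move/allP: all1 => /(_ u uin) /andP[].
have in2 : forall u, u \in us2 -> (u *m H = 0 /\ u != 0).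
  by move=> u uin; move/allP: all2 => /(_ u uin) /andP[/sub_kermxP].
pose le := fun a b : 'rV[R]_n => ev b <= ev a.
set s1 := sort le us1.
have mem1 : s1 =i us1 by apply: mem_sort.
have sz1' : size s1 = h by rewrite size_sort.
have hn : (h <= n)%N by rewrite -rH rank_leq_row.
set L := s1 ++ us2.
have szL : size L = n by rewrite size_cat sz1' sz2 subnKC.
have eigL : forall u, u \in L -> u *m C0 = ev u *: (u *m Sigma) /\ 0 <= ev u /\ u != 0.
  move=> u; rewrite mem_cat mem1 => uin.
  have [x ex] : exists x, u *m C0 = x *: (u *m Sigma).
    by case/orP: uin => [/eig1|/eig2].
  have un0 : u != 0 by case/orP: uin => [/in1[]|/in2[]].
  by rewrite (evE _ _ un0 ex); split => //; split => //; apply: (evnn u x).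
have orthL : {in L &, forall u w, u != w -> u *m Sigma *m w^T = 0}.
  move=> u w; rewrite !mem_cat !mem1 => /orP[uin|uin] /orP[win|win].
  - exact: orth1.
  - by move=> _; apply: cross; [case: (in1 u uin)|case: (in2 w win)].
  - by move=> _; apply: (orth_sym hS); apply: cross; [case: (in1 w win)|case: (in2 u uin)].
  - exact: orth2.
have uqL : uniq L.
  rewrite cat_uniq sort_uniq uq1 uq2 andbT /=; apply/hasPn => w win.
  rewrite mem1; apply/negP => win1.
  have [wS wn0] := in1 w win1; have [wH _] := in2 w win.
  by move: (uSu_neq0 hpd wn0); rewrite (cross w w wS wH) eqxx.
pose w := fun k : 'I_n => (nth 0 L k)^T.
pose dd := fun k : 'I_n => ev (nth 0 L k).
pose delta := fun (i : nat) (k : 'I_n) => iter i (@fstep R) (dd k).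
have inL : forall k : 'I_n, nth 0 L k \in L by move=> k; rewrite mem_nth // szL.
have dd0 : forall k, 0 <= dd k by move=> k; have [_ []] := eigL _ (inL k).
have rowW : forall k, row k (\matrix_(k < n) (w k)^T) = nth 0 L k.
  by move=> k; rewrite rowK trmxK.
have rf : row_free (\matrix_(k < n) (w k)^T).
  apply: (orth_free hpd) => [k|k l kl]; rewrite !rowW.
    by have [_ []] := eigL _ (inL k).
  apply: orthL; rewrite ?inL //.
  by rewrite nth_uniq ?szL.
have eig0 : forall l, C0 *m w l = dd l *: (Sigma *m w l).
  by move=> l; apply: col_of_row => //; have [] := eigL _ (inL l).
have eigi : forall i l, Cseq Sigma C0 i *m w l = delta i l *: (Sigma *m w l).
  elim=> [|i IH] l; first exact: eig0.
  rewrite [Cseq _ _ _]/= /delta iterS; apply: step1; last exact: IH.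
    apply: (unit_step hU rf _ IH) => k; exact: iter_ge0.
  exact: iter_ge0.
have unitC : forall i, (Cseq Sigma C0 i + Sigma) \in unitmx.
  move=> i; apply: (unit_step hU rf _ (eigi i)) => k; exact: iter_ge0.
split.
  move=> w0 t0 w0n0 h0 i.
  have t0ge : 0 <= t0.
    have := psd w0^T; rewrite trmxK -mulmxA.
    rewrite /gen_eig /C /= -/C0 in h0; rewrite h0 -scalemxAr e_scale.
    rewrite pmulr_lge0 //; have := hpd w0^T; rewrite trmx_eq0 trmxK mulmxA; exact.
  exists (iter i (@fstep R) t0); split; last first.
    by split => [->|/iter_gt0 //]; rewrite iter0.
  rewrite /gen_eig /C; elim: i => [|i IH]; first by rewrite /gen_eig /C /= -/C0 in h0 *.
  rewrite [Cseq _ _ _]/= iterS; apply: step1.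
  - exact: (unitC i).
  - exact: iter_ge0.
  - exact: IH.
have srt : sorted le s1 by apply: sort_sorted => a b; rewrite /le; exact: le_total.
have le_tr : transitive le by move=> b a c; rewrite /le => h1 h2; exact: le_trans h2 h1.
have le_refl : reflexive le by move=> a; rewrite /le.
have sortnth : forall k l, (k <= l)%N -> (l < h)%N -> ev (nth 0 s1 l) <= ev (nth 0 s1 k).
  move=> k l kl lh; apply: (sorted_leq_nth le_tr le_refl 0 srt) => //; rewrite inE sz1' //.
  exact: leq_ltn_trans kl lh.
have nthL1 : forall l, (l < h)%N -> nth 0 L l = nth 0 s1 l.
  by move=> l lh; rewrite nth_cat sz1' lh.
have nthL2 : forall l, (h <= l)%N -> nth 0 L l = nth 0 us2 (l - h).
  by move=> l hl; rewrite nth_cat sz1' ltnNge hl.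
have ran : forall l : 'I_n, (l < h)%N -> in_ran_SinvH Sigma H (w l).
  move=> l lh; have : nth 0 s1 l \in us1 by rewrite -mem1 mem_nth // sz1'.
  move=> /in1 [/submxP [D e] _]; exists D^T.
  by rewrite /w nthL1 // e /S1 !trmx_mul trmxK trmx_inv hS.
pose p0 := fun u : 'rV[R]_n => ev u == 0.
have rh : (find p0 s1 <= h)%N by rewrite -sz1' find_size.
exists w, delta, (find p0 s1); split.
- exact: rf.
- move=> k l kl; rewrite /w trmxK orthL ?inL ?mxE //.
  by rewrite nth_uniq ?szL.
- by move=> i l; apply: eigi.
- exact: rh.
split.
- split.
    move=> l lr; have lh : (l < h)%N by exact: leq_trans lr rh.
    split; first exact: ran.
    move=> i; apply: iter_gt0; rewrite lt_def dd0 andbT.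
    by have := before_find 0 lr; rewrite /p0 /dd nthL1 // => ->.
  move=> i k l _ kl lr; have lh : (l < h)%N by exact: leq_trans lr rh.
  apply: iter_mono; first exact: dd0.
  by rewrite /dd !nthL1 ?(leq_ltn_trans kl lh) //; apply: sortnth.
- move=> l rl lh; split; first exact: ran.
  move=> i; rewrite /delta; suff -> : dd l = 0 by rewrite iter0.
  have hf : has p0 s1.
    by rewrite has_find sz1'; exact: leq_ltn_trans rl lh.
  have /eqP e0 := nth_find 0 hf.
  apply: le_anti; rewrite dd0 andbT -e0 /dd nthL1 //; exact: sortnth.
- move=> l hl; have ln := ltn_ord l.
  have u_in : nth 0 us2 (l - h) \in us2 by rewrite mem_nth // sz2; lia.
  have [uH _] := in2 _ u_in.
  split; first by rewrite /in_ker_HT /w nthL2 // -trmx_mul uH trmx0.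
  move=> i; rewrite /delta; suff -> : dd l = 0 by rewrite iter0.
  by rewrite /dd nthL2 // /ev /C0 !mulmxA uH !mul0mx mxE mul0r.
Qed.
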